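(* Let $A$ be a unital $*$-ring which is not $*$-symmetric. Then for every integer $n>1$, the matrix ring $\mathbb M_n(A)$ with the $*$-transpose involution is not a Rickart $*$-ring.
   Context: A unital $*$-ring $A$ is $*$-symmetric if $1+xx^*$ is invertible for every $x\in A$. The $*$-transpose involution on $\mathbb M_n(A)$ is $(a_{ij})^*=(a_{ji}^* )$. A Rickart $*$-ring is a $*$-ring in which the right annihilator of every element is generated as a right ideal by a projection ($p=p^2=p^*$). *)

(* Defs.v *)
From HB Require Import structures.
From mathcomp Require Import all_boot all_order all_algebra.
Set Implicit Arguments. Unset Strict Implicit. Unset Printing Implicit Defensive.
Import GRing.Theory.
Local Open Scope ring_scope.

Definition is_involution (R : pzRingType) (star : R -> R) : Prop :=
  [/\ forall x y, star (x + y) = star x + star y,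
      forall x y, star (x * y) = star y * star x
    & forall x, star (star x) = x].

Definition invertible (R : pzRingType) (a : R) : Prop :=
  exists b : R, a * b = 1 /\ b * a = 1.

Definition star_symmetric (R : pzRingType) (star : R -> R) : Prop :=
  forall x : R, invertible (1 + x * star x).

Definition is_projection (R : pzRingType) (star : R -> R) (p : R) : Prop :=
  p * p = p /\ star p = p.

Definition rickart (R : pzRingType) (star : R -> R) : Prop :=
  forall x : R, exists p : R, is_projection star p /\
    (forall y : R, x * y = 0 <-> exists z : R, y = p * z).

Definition mxstar (R : pzRingType) (star : R -> R) (n : nat)
  (M : 'M[R]_n) : 'M[R]_n := \matrix_(i < n, j < n) star (M j i).

(* Main.v *)
Require Import Defs.
From HB Require Import structures.
From mathcomp Require Import all_boot all_order all_algebra.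
Local Open Scope ring_scope.
Import GRing.Theory.

Theorem mainTheorem18 (A : pzRingType) (star : A -> A) :
  is_involution star -> ~ star_symmetric star ->
  forall n : nat, (1 < n)%N -> ~ rickart (@mxstar A star n).
Proof.
move=> [sD sM sK] nsym n.
case: n => [|[|m]] // _ rick.
have s0 : star 0 = 0.
  by apply: (addIr (star 0)); rewrite -sD !addr0 add0r.
have sN : forall a, star (- a) = - star a.
  move=> a; apply: (addIr (star a)); by rewrite -sD !addNr s0.
have s1 : star 1 = 1.
  have h : star (1 * star 1) = star 1 by rewrite sM sK mul1r.
  by rewrite mul1r sK in h.
apply: nsym => x.
set y := star x.
set i0 : 'I_m.+2 := ord0.
set i1 : 'I_m.+2 := @Ordinal m.+2 1 isT.
have n10 : (i1 == i0) = false by [].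
have n01 : (i0 == i1) = false by [].
pose X : 'M[A]_m.+2 := \matrix_(i, j)
   (if i == i0 then (if j == i0 then 1 else if j == i1 then y else 0) else 0).
pose V : 'M[A]_m.+2 := \matrix_(i, j)
   (if j == i0 then (if i == i0 then - y else if i == i1 then 1 else 0) else 0).
have XM : forall (M : 'M[A]_m.+2) j, (X * M) i0 j = M i0 j + y * M i1 j.
  move=> M j; rewrite -mulmxE mxE (bigD1 i0) //= (bigD1 i1) //= big1.
    rewrite !mxE eqxx n10 eqxx mul1r addr0.
    by [].
  move=> k /andP [k1 k0]; rewrite mxE eqxx (negbTE k1) (negbTE k0) mul0r //.
have XMo : forall (M : 'M[A]_m.+2) i j, i != i0 -> (X * M) i j = 0.
  move=> M i j hi; rewrite -mulmxE mxE big1 // => k _.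
  by rewrite mxE (negbTE hi) mul0r.
have XV : X * V = 0.
  apply/matrixP => i j; rewrite [RHS]mxE.
  case: (eqVneq i i0) => [->|hi]; last by rewrite XMo.
  rewrite XM !mxE eqxx n10 eqxx.
  by case: (j == i0); rewrite ?mulr1 ?addNr // mulr0 addr0.
have [P [[PP Ps] PR]] := rick X.
have XP : X * P = 0 by apply/PR; exists 1; rewrite mulr1.
have PV : P * V = V.
  have [Z ->] := (PR V).1 XV.
  by rewrite mulrA PP.
have Psym : forall i j, P i j = star (P j i).
  by move=> i j; rewrite -{1}Ps mxE.
have Pcol : forall j, P i0 j = - (y * P i1 j).
  move=> j; apply/eqP; rewrite -addr_eq0 -XM XP mxE //.
have h : P i1 i1 * (1 + x * y) = 1.
  have := congr1 (fun M : 'M[A]_m.+2 => M i1 i0) PV => /=.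
  rewrite -mulmxE mxE (bigD1 i0) //= (bigD1 i1) //= big1.
    rewrite !mxE eqxx n10 eqxx addr0 mulr1 Psym Pcol sN sM.
    rewrite -Psym /y sK => e; rewrite -[RHS]e.
    by rewrite mulrN mulNr opprK mulrDr mulr1 mulrA addrC.
  move=> k /andP [k1 k0]; rewrite mxE eqxx (negbTE k0) (negbTE k1) mulr0 //.
exists (P i1 i1); split => //.
have := congr1 star h.
by rewrite sM s1 sD s1 sM /y sK -Psym.
Qed.
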